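(* For every $n\ge2$: (a) there exists an invariant immersed framework in $\mathbb{R}^3$ whose underlying graph is the complete graph $K_{n+2}$ and whose invariance function $\gamma$ is constant; (b) there exists an invariant embedded framework in $\mathbb{R}^n$ whose underlying graph is $K_{n+2}$ and whose invariance function $\gamma$ is constant.
   Context: A framework in $\mathbb{R}^M$ is a finite simple graph $(V,E)$ together with an assignment of a point $\vec x\in\mathbb{R}^M$ to each vertex, edges being straight segments. It is immersed if distinct vertices are assigned distinct points, and embedded if it is immersed and no two edges intersect except at common endpoints. Let $P:\mathbb{R}^M\to\mathbb{C}$, $P(y_1,\dots,y_M)=y_1+iy_2$. The framework is invariant if there is a function $\gamma:V\to\mathbb{R}$ such that for every orthogonal transformation $A$ of $\mathbb{R}^M$, the function $\phi_A(x)=P(A\vec x)$ satisfies, at every vertex $x$ of degree $n(x)$, $\frac{\gamma(x)}{n(x)}\big(\sum_{y\sim x}(\phi_A(y)-\phi_A(x))\big)^2=\sum_{y\sim x}(\phi_A(x)-\phi_A(y))^2$. *)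

(* Defs.v *)
From Stdlib Require Import Reals Arith Bool.
Open Scope R_scope.

Fixpoint rsum (n : nat) (f : nat -> R) : R :=
  match n with O => 0 | S k => rsum k f + f k end.

(* Complex numbers as pairs (re, im) *)
Definition cplx := (R * R)%type.
Definition Cadd (z w : cplx) : cplx := (fst z + fst w, snd z + snd w).
Definition Csub (z w : cplx) : cplx := (fst z - fst w, snd z - snd w).
Definition Cmul (z w : cplx) : cplx :=
  (fst z * fst w - snd z * snd w, fst z * snd w + snd z * fst w).
Definition Cscale (r : R) (z : cplx) : cplx := (r * fst z, r * snd z).
Definition Csq (z : cplx) : cplx := Cmul z z.
Fixpoint Csum (n : nat) (f : nat -> cplx) : cplx :=
  match n with O => (0, 0) | S k => Cadd (Csum k f) (f k) end.

(* Points of R^M: functions nat -> R, only coordinates 0..M-1 matter. *)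
Definition vec := nat -> R.
Definition vec_eq (M : nat) (u v : vec) : Prop := forall i, (i < M)%nat -> u i = v i.

Definition orthogonal (M : nat) (A : nat -> nat -> R) : Prop :=
  forall i j, (i < M)%nat -> (j < M)%nat ->
    rsum M (fun k => A k i * A k j) = if Nat.eqb i j then 1 else 0.
Definition mat_apply (M : nat) (A : nat -> nat -> R) (v : vec) : vec :=
  fun i => rsum M (fun j => A i j * v j).

(* P(y_1,...,y_M) = y_1 + i y_2 *)
Definition Pproj (v : vec) : cplx := (v 0%nat, v 1%nat).

Definition simple_graph (N : nat) (adj : nat -> nat -> bool) : Prop :=
  (forall x, (x < N)%nat -> adj x x = false) /\
  (forall x y, (x < N)%nat -> (y < N)%nat -> adj x y = adj y x).

Definition complete_graph (x y : nat) : bool := negb (Nat.eqb x y).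

Definition degree (N : nat) (adj : nat -> nat -> bool) (x : nat) : nat :=
  List.length (List.filter (adj x) (List.seq 0 N)).

(* A framework in R^M on graph (N, adj) is a map p : vertices -> R^M. *)
Definition immersed (M N : nat) (p : nat -> vec) : Prop :=
  forall x y, (x < N)%nat -> (y < N)%nat -> x <> y -> ~ vec_eq M (p x) (p y).

Definition on_segment (M : nat) (a b z : vec) : Prop :=
  exists t, 0 <= t <= 1 /\ forall i, (i < M)%nat -> z i = (1 - t) * a i + t * b i.

Definition same_edge (a b c d : nat) : Prop :=
  (a = c /\ b = d) \/ (a = d /\ b = c).

Definition embedded (M N : nat) (adj : nat -> nat -> bool) (p : nat -> vec) : Prop :=
  immersed M N p /\
  forall a b c d z,
    (a < N)%nat -> (b < N)%nat -> (c < N)%nat -> (d < N)%nat ->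
    adj a b = true -> adj c d = true -> ~ same_edge a b c d ->
    on_segment M (p a) (p b) z -> on_segment M (p c) (p d) z ->
    exists v, (v = a \/ v = b) /\ (v = c \/ v = d) /\ vec_eq M z (p v).

Definition invariant_with (M N : nat) (adj : nat -> nat -> bool) (p : nat -> vec)
    (gamma : nat -> R) : Prop :=
  forall A, orthogonal M A ->
    let phi := fun y => Pproj (mat_apply M A (p y)) in
    forall x, (x < N)%nat ->
      Cscale (gamma x / INR (degree N adj x))
        (Csq (Csum N (fun y => if adj x y then Csub (phi y) (phi x) else (0, 0))))
      = Csum N (fun y => if adj x y then Csq (Csub (phi x) (phi y)) else (0, 0)).

Definition invariant (M N : nat) (adj : nat -> nat -> bool) (p : nat -> vec) : Prop :=
  exists gamma, invariant_with M N adj p gamma.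

(* Main.v *)
Require Import Defs.
From Stdlib Require Import Reals Arith Bool Lia Lra List.
Open Scope R_scope.
From mathcomp Require all_boot all_algebra Rstruct.

Section MC.
Import ssreflect ssrfun ssrbool eqtype ssrnat seq fintype bigop ssralg matrix Rstruct.
Import GRing.Theory.
Local Open Scope ring_scope.

Lemma rsum_big n (f : nat -> R) : rsum n f = \sum_(k < n) f k.
Proof.
elim: n => [|n IH] /=; first by rewrite big_ord0.
by rewrite big_ord_recr /= IH.
Qed.

Lemma rows_orth M (A : nat -> nat -> R) : orthogonal M A ->
  forall i j, (i < M)%coq_nat -> (j < M)%coq_nat ->
  rsum M (fun k => A i k * A j k) = if Nat.eqb i j then 1 else 0.
Proof.
move=> HO i j Hi Hj.
pose B : 'M[R]_M := \matrix_(a, b) A a b.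
have H1 : B^T *m B = 1%:M.
  apply/matrixP => a b; rewrite !mxE.
  have := HO a b (ltP (ltn_ord a)) (ltP (ltn_ord b)).
  rewrite rsum_big => Hs.
  have -> : (a == b) = Nat.eqb a b by apply/eqP/Nat.eqb_spec => [->|/val_inj].
  have -> : (Nat.eqb a b)%:R = (if Nat.eqb a b then 1 else 0 : R) by case: (Nat.eqb _ _).
  rewrite -Hs.
  by apply: eq_bigr => k _; rewrite !mxE.
have H2 := mulmx1C H1.
move/matrixP: H2 => /(_ (Ordinal (introT ltP Hi)) (Ordinal (introT ltP Hj))).
rewrite !mxE rsum_big.
have -> : (Ordinal (introT ltP Hi) == Ordinal (introT ltP Hj)) = Nat.eqb i j.
  by apply/eqP/Nat.eqb_spec => [[]|E]//; apply: val_inj.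
have -> : (Nat.eqb i j)%:R = (if Nat.eqb i j then 1 else 0 : R) by case: (Nat.eqb _ _).
move=> <-.
by apply: eq_bigr => k _; rewrite !mxE.
Qed.
End MC.

Lemma rows_orthR M (A : nat -> nat -> R) : orthogonal M A ->
  forall i j, (i < M)%nat -> (j < M)%nat ->
  rsum M (fun k => A i k * A j k) = if Nat.eqb i j then 1 else 0.
Proof. intros H i j Hi Hj. exact (rows_orth M A H i j Hi Hj). Qed.

Lemma Csum_pair N f : Csum N f = (rsum N (fun y => fst (f y)), rsum N (fun y => snd (f y))).
Proof. induction N; simpl; auto. rewrite IHN. reflexivity. Qed.

Lemma Csum_drop N x f : f x = (0,0) ->
  Csum N (fun y => if complete_graph x y then f y else (0,0)) = Csum N f.
Proof.
  intro H. induction N; simpl; auto. rewrite IHN. f_equal.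
  unfold complete_graph. destruct (Nat.eqb_spec x N); subst; simpl; auto.
Qed.

Lemma L1 N (a : nat -> R) c : rsum N (fun y => a y - c) = rsum N a - INR N * c.
Proof. induction N; simpl rsum; [simpl; ring|]. rewrite IHN, S_INR. ring. Qed.

Lemma L2 N (a b : nat -> R) c d :
  rsum N (fun y => (c - a y)*(c - a y) - (d - b y)*(d - b y)) =
  INR N*(c*c-d*d) - 2*c*rsum N a + 2*d*rsum N b + rsum N (fun y => a y*a y - b y * b y).
Proof. induction N; simpl rsum; [simpl; ring|]. rewrite IHN, S_INR. ring. Qed.

Lemma L3 N (a b : nat -> R) c d :
  rsum N (fun y => (c - a y)*(d - b y) + (d - b y)*(c - a y)) =
  2*(INR N*c*d - c*rsum N b - d*rsum N a + rsum N (fun y => a y * b y)).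
Proof. induction N; simpl rsum; [simpl; ring|]. rewrite IHN, S_INR. ring. Qed.

Lemma filt_len N x : length (filter (complete_graph x) (seq 0 N)) =
  if Nat.ltb x N then (N - 1)%nat else N.
Proof.
  induction N; [reflexivity|].
  rewrite seq_S, filter_app, length_app, IHN. simpl.
  unfold complete_graph at 1. 
  destruct (Nat.eqb_spec x N); subst; simpl.
  - destruct (Nat.ltb_spec N N); [lia|]. destruct (Nat.ltb_spec N (S N)); lia.
  - destruct (Nat.ltb_spec x N); destruct (Nat.ltb_spec x (S N)); lia.
Qed.

Lemma degree_complete N x : (x < N)%nat -> degree N complete_graph x = (N - 1)%nat.
Proof.
  intro H. unfold degree. rewrite filt_len. destruct (Nat.ltb_spec x N); lia.
Qed.

Lemma inv_general M N p : (2 <= N)%nat ->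
  (forall A, orthogonal M A ->
     INR N * rsum N (fun y => mat_apply M A (p y) 0%nat * mat_apply M A (p y) 0%nat
                         - mat_apply M A (p y) 1%nat * mat_apply M A (p y) 1%nat)
     = rsum N (fun y => mat_apply M A (p y) 0%nat) * rsum N (fun y => mat_apply M A (p y) 0%nat)
       - rsum N (fun y => mat_apply M A (p y) 1%nat) * rsum N (fun y => mat_apply M A (p y) 1%nat)
     /\ INR N * rsum N (fun y => mat_apply M A (p y) 0%nat * mat_apply M A (p y) 1%nat)
     = rsum N (fun y => mat_apply M A (p y) 0%nat) * rsum N (fun y => mat_apply M A (p y) 1%nat)) ->
  invariant_with M N complete_graph p (fun _ => (INR N - 1) / INR N).
Proof.
  intros HN Hs A HA. cbv zeta. intros x Hx.
  destruct (Hs A HA) as [H1 H2].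
  set (a := fun y => mat_apply M A (p y) 0%nat) in *.
  set (b := fun y => mat_apply M A (p y) 1%nat) in *.
  rewrite degree_complete by exact Hx.
  rewrite !Csum_drop.
  2: { unfold Csq, Cmul, Csub. simpl. f_equal; ring. }
  2: { unfold Csub. simpl. f_equal; ring. }
  rewrite !Csum_pair. unfold Csub, Csq, Cmul, Cscale, Pproj. simpl.
  change (fun y => mat_apply M A (p y) 0%nat - mat_apply M A (p x) 0%nat) with (fun y => a y - a x).
  change (fun y => mat_apply M A (p y) 1%nat - mat_apply M A (p x) 1%nat) with (fun y => b y - b x).
  change (fun y => (mat_apply M A (p x) 0%nat - mat_apply M A (p y) 0%nat) * (mat_apply M A (p x) 0%nat - mat_apply M A (p y) 0%nat) -
      (mat_apply M A (p x) 1%nat - mat_apply M A (p y) 1%nat) * (mat_apply M A (p x) 1%nat - mat_apply M A (p y) 1%nat))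
    with (fun y => (a x - a y)*(a x - a y) - (b x - b y)*(b x - b y)).
  change (fun y => (mat_apply M A (p x) 0%nat - mat_apply M A (p y) 0%nat) * (mat_apply M A (p x) 1%nat - mat_apply M A (p y) 1%nat) +
      (mat_apply M A (p x) 1%nat - mat_apply M A (p y) 1%nat) * (mat_apply M A (p x) 0%nat - mat_apply M A (p y) 0%nat))
    with (fun y => (a x - a y)*(b x - b y) + (b x - b y)*(a x - a y)).
  rewrite !L1, L2, L3.
  rewrite minus_INR by lia. simpl INR.
  assert (HN' : INR N >= 2). { replace 2 with (INR 2) by (simpl; ring). apply Rle_ge, le_INR. exact HN. }
  assert (Q1 : rsum N (fun y => a y * a y - b y * b y) = (rsum N a * rsum N a - rsum N b * rsum N b) / INR N).
  { rewrite <- H1. unfold a, b. field. lra. }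
  assert (Q2 : rsum N (fun y => a y * b y) = (rsum N a * rsum N b) / INR N).
  { rewrite <- H2. unfold a, b. field. lra. }
  rewrite Q1, Q2. f_equal; field; lra.
Qed.

Lemma rsum_ext_lt n (f g : nat -> R) : (forall j, (j < n)%nat -> f j = g j) -> rsum n f = rsum n g.
Proof. intro H. induction n; simpl; auto. rewrite IHn by (intros; apply H; lia). rewrite H by lia. auto. Qed.

Lemma rsum_delta n (f : nat -> R) k r :
  rsum n (fun j => f j * (if Nat.eqb j k then r else 0)) = if Nat.ltb k n then f k * r else 0.
Proof.
  induction n; simpl; auto. rewrite IHn.
  destruct (Nat.eqb_spec n k); destruct (Nat.ltb_spec k n); destruct (Nat.ltb_spec k (S n)); subst; try lia; ring.
Qed.

Lemma rsum_mulc n (f : nat -> R) c : rsum n (fun j => f j * c) = rsum n f * c.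
Proof. induction n; simpl; [ring|]. rewrite IHn. ring. Qed.

Lemma rsum_lin n (x y : nat -> R) a b : rsum n (fun j => a * x j + b * y j) = a * rsum n x + b * rsum n y.
Proof. induction n; simpl; [ring|]. rewrite IHn. ring. Qed.

Lemma rsum_minus n (x y : nat -> R) : rsum n (fun j => x j - y j) = rsum n x - rsum n y.
Proof. induction n; simpl; [ring|]. rewrite IHn. ring. Qed.

Lemma rsum_sq_nonneg n (x : nat -> R) : 0 <= rsum n (fun j => x j * x j).
Proof. induction n; simpl; [lra|]. nra. Qed.

Lemma rsum_S2 n (F : nat -> R) : rsum (n + 2) F = rsum n F + F n + F (S n).
Proof. replace (n + 2)%nat with (S (S n)) by lia. reflexivity. Qed.

Definition tb (n : nat) : R := - 1 / (sqrt (INR (n + 2)) + 1).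

Definition pb (n : nat) (t : R) (v : nat) : vec :=
  fun j => if Nat.ltb v n then (if Nat.eqb j v then 1 else 0)
           else if Nat.eqb v n then t else 0.

Lemma tb_facts n : tb n < 0 /\ INR (n + 2) * (tb n * tb n) = (1 + tb n) * (1 + tb n).
Proof.
  unfold tb.
  assert (H0 : 0 <= sqrt (INR (n + 2))) by apply sqrt_pos.
  assert (Hs : sqrt (INR (n + 2)) * sqrt (INR (n + 2)) = INR (n + 2)) by (apply sqrt_sqrt; apply pos_INR).
  set (s := sqrt (INR (n + 2))) in *.
  split.
  - unfold Rdiv. assert (0 < / (s + 1)) by (apply Rinv_0_lt_compat; lra). nra.
  - rewrite <- Hs. field. lra.
Qed.

Lemma pb_apply n t A i y : (y < n)%nat -> mat_apply n A (pb n t y) i = A i y.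
Proof.
  intro Hy. unfold mat_apply.
  rewrite (rsum_ext_lt n _ (fun j => A i j * (if Nat.eqb j y then 1 else 0))).
  - rewrite rsum_delta. destruct (Nat.ltb_spec y n); [ring|lia].
  - intros j Hj. unfold pb. destruct (Nat.ltb_spec y n); [reflexivity|lia].
Qed.

Lemma pb_apply_n n t A i : mat_apply n A (pb n t n) i = rsum n (A i) * t.
Proof.
  unfold mat_apply, pb. rewrite <- rsum_mulc. apply rsum_ext_lt. intros j Hj.
  destruct (Nat.ltb_spec n n); [lia|]. rewrite Nat.eqb_refl. reflexivity.
Qed.

Lemma pb_apply_Sn n t A i : mat_apply n A (pb n t (S n)) i = 0.
Proof.
  unfold mat_apply, pb. rewrite (rsum_ext_lt n _ (fun j => A i j * 0)).
  - rewrite rsum_mulc. ring.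
  - intros j Hj. destruct (Nat.ltb_spec (S n) n); [lia|].
    destruct (Nat.eqb_spec (S n) n); [lia|]. reflexivity.
Qed.

Lemma inv_b n : (2 <= n)%nat ->
  invariant_with n (n + 2) complete_graph (pb n (tb n)) (fun _ => (INR (n + 2) - 1) / INR (n + 2)).
Proof.
  intro Hn. apply inv_general; [lia|]. intros A HA.
  destruct (tb_facts n) as [Ht0 Ht].
  set (t := tb n) in *.
  rewrite !rsum_S2. cbv beta. rewrite !pb_apply_n, !pb_apply_Sn.
  rewrite (rsum_ext_lt n (fun y => mat_apply n A (pb n t y) 0%nat * mat_apply n A (pb n t y) 0%nat -
     mat_apply n A (pb n t y) 1%nat * mat_apply n A (pb n t y) 1%nat)
     (fun y => A 0%nat y * A 0%nat y - A 1%nat y * A 1%nat y))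
    by (intros; rewrite !pb_apply by lia; reflexivity).
  rewrite (rsum_ext_lt n (fun y => mat_apply n A (pb n t y) 0%nat * mat_apply n A (pb n t y) 1%nat)
     (fun y => A 0%nat y * A 1%nat y))
    by (intros; rewrite !pb_apply by lia; reflexivity).
  rewrite (rsum_ext_lt n (fun y => mat_apply n A (pb n t y) 0%nat) (A 0%nat))
    by (intros; rewrite !pb_apply by lia; reflexivity).
  rewrite (rsum_ext_lt n (fun y => mat_apply n A (pb n t y) 1%nat) (A 1%nat))
    by (intros; rewrite !pb_apply by lia; reflexivity).
  rewrite rsum_minus.
  rewrite (rows_orthR n A HA 0 0), (rows_orthR n A HA 1 1), (rows_orthR n A HA 0 1) by lia.
  simpl Nat.eqb. cbv iota.
  set (s0 := rsum n (A 0%nat)). set (s1 := rsum n (A 1%nat)).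
  split.
  - transitivity ((INR (n + 2) * (t * t)) * (s0 * s0 - s1 * s1)); [ring|]. rewrite Ht. ring.
  - transitivity ((INR (n + 2) * (t * t)) * (s0 * s1)); [ring|]. rewrite Ht. ring.
Qed.

Definition K1 (m : nat) : R := rsum m (fun y => INR (S y)).
Definition K2 (m : nat) : R := rsum m (fun y => INR (S y) * INR (S y)).
Definition ra (m : nat) : R := - (sqrt (INR (m + 3) * K2 m) + K1 m).

Definition pa (m : nat) (r : R) (y : nat) : vec :=
  fun j => if Nat.ltb y m then INR (S y) else if Nat.eqb j (y - m) then r else 0.

Lemma rsum_nonneg n (f : nat -> R) : (forall j, 0 <= f j) -> 0 <= rsum n f.
Proof. intro H. induction n; simpl; [lra|]. specialize (H n). lra. Qed.

Lemma K1_ge1 m : (1 <= m)%nat -> 1 <= K1 m.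
Proof.
  intro Hm. destruct m as [|m']; [lia|]. unfold K1. cbn [rsum].
  assert (0 <= rsum m' (fun y => INR (S y))) by (apply rsum_nonneg; intro; apply pos_INR).
  assert (1 <= INR (S m')) by (rewrite S_INR; pose proof (pos_INR m'); lra). lra.
Qed.

Lemma ra_facts m : (1 <= m)%nat -> ra m < 0 /\ INR (m + 3) * K2 m = (K1 m + ra m) * (K1 m + ra m).
Proof.
  intro Hm. pose proof (K1_ge1 m Hm).
  assert (HK2 : 0 <= INR (m + 3) * K2 m).
  { apply Rmult_le_pos; [apply pos_INR|]. unfold K2. apply rsum_sq_nonneg. }
  pose proof (sqrt_pos (INR (m + 3) * K2 m)).
  pose proof (sqrt_sqrt _ HK2).
  unfold ra. split; [lra|].
  transitivity (sqrt (INR (m + 3) * K2 m) * sqrt (INR (m + 3) * K2 m)); [lra|ring].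
Qed.

Lemma rsum_S3 m (F : nat -> R) : rsum (m + 3) F = rsum m F + F m + F (S m) + F (S (S m)).
Proof. replace (m + 3)%nat with (S (S (S m))) by lia. reflexivity. Qed.

Lemma pa_apply_lt m r A i y : (y < m)%nat -> mat_apply 3 A (pa m r y) i = rsum 3 (A i) * INR (S y).
Proof.
  intro Hy. unfold mat_apply, pa. rewrite <- rsum_mulc. apply rsum_ext_lt. intros j Hj.
  destruct (Nat.ltb_spec y m); [reflexivity|lia].
Qed.

Lemma pa_apply_ge m r A i y k : y = (m + k)%nat -> (k < 3)%nat -> mat_apply 3 A (pa m r y) i = A i k * r.
Proof.
  intros Hy Hk. unfold mat_apply.
  rewrite (rsum_ext_lt 3 _ (fun j => A i j * (if Nat.eqb j k then r else 0))).
  - rewrite rsum_delta. destruct (Nat.ltb_spec k 3); [ring|lia].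
  - intros j Hj. unfold pa. destruct (Nat.ltb_spec y m); [lia|].
    replace (y - m)%nat with k by lia. reflexivity.
Qed.

Lemma inv_a m : (1 <= m)%nat ->
  invariant_with 3 (m + 3) complete_graph (pa m (ra m)) (fun _ => (INR (m + 3) - 1) / INR (m + 3)).
Proof.
  intro Hm. apply inv_general; [lia|]. intros A HA.
  destruct (ra_facts m Hm) as [Hr0 HK].
  set (r := ra m) in *.
  rewrite !rsum_S3. cbv beta.
  rewrite (pa_apply_ge m r A 0 m 0), (pa_apply_ge m r A 1 m 0),
    (pa_apply_ge m r A 0 (S m) 1), (pa_apply_ge m r A 1 (S m) 1),
    (pa_apply_ge m r A 0 (S (S m)) 2), (pa_apply_ge m r A 1 (S (S m)) 2) by lia.
  set (s0 := rsum 3 (A 0%nat)). set (s1 := rsum 3 (A 1%nat)).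
  rewrite (rsum_ext_lt m (fun y => mat_apply 3 A (pa m r y) 0%nat * mat_apply 3 A (pa m r y) 0%nat -
     mat_apply 3 A (pa m r y) 1%nat * mat_apply 3 A (pa m r y) 1%nat)
     (fun y => INR (S y) * INR (S y) * (s0 * s0 - s1 * s1)))
    by (intros; rewrite !pa_apply_lt by lia; unfold s0, s1; ring).
  rewrite (rsum_ext_lt m (fun y => mat_apply 3 A (pa m r y) 0%nat * mat_apply 3 A (pa m r y) 1%nat)
     (fun y => INR (S y) * INR (S y) * (s0 * s1)))
    by (intros; rewrite !pa_apply_lt by lia; unfold s0, s1; ring).
  rewrite (rsum_ext_lt m (fun y => mat_apply 3 A (pa m r y) 0%nat) (fun y => INR (S y) * s0))
    by (intros; rewrite !pa_apply_lt by lia; unfold s0; ring).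
  rewrite (rsum_ext_lt m (fun y => mat_apply 3 A (pa m r y) 1%nat) (fun y => INR (S y) * s1))
    by (intros; rewrite !pa_apply_lt by lia; unfold s1; ring).
  rewrite !rsum_mulc. fold (K1 m). fold (K2 m).
  pose proof (rows_orthR 3 A HA 0 0) as H00.
  pose proof (rows_orthR 3 A HA 1 1) as H11.
  pose proof (rows_orthR 3 A HA 0 1) as H01.
  simpl in H00, H11, H01.
  assert (E00 : A 0%nat 0%nat * A 0%nat 0%nat + A 0%nat 1%nat * A 0%nat 1%nat + A 0%nat 2%nat * A 0%nat 2%nat - 1 = 0) by (specialize (H00 ltac:(lia) ltac:(lia)); lra).
  assert (E11 : A 1%nat 0%nat * A 1%nat 0%nat + A 1%nat 1%nat * A 1%nat 1%nat + A 1%nat 2%nat * A 1%nat 2%nat - 1 = 0) by (specialize (H11 ltac:(lia) ltac:(lia)); lra).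
  assert (E01 : A 0%nat 0%nat * A 1%nat 0%nat + A 0%nat 1%nat * A 1%nat 1%nat + A 0%nat 2%nat * A 1%nat 2%nat = 0) by (specialize (H01 ltac:(lia) ltac:(lia)); lra).
  assert (EK : INR (m + 3) * K2 m - (K1 m + r) * (K1 m + r) = 0) by lra.
  unfold s0, s1. simpl rsum.
  split; apply Rminus_diag_uniq.
  - transitivity (INR (m + 3) * r * r *
        (A 0%nat 0%nat * A 0%nat 0%nat + A 0%nat 1%nat * A 0%nat 1%nat + A 0%nat 2%nat * A 0%nat 2%nat - 1)
      - INR (m + 3) * r * r *
        (A 1%nat 0%nat * A 1%nat 0%nat + A 1%nat 1%nat * A 1%nat 1%nat + A 1%nat 2%nat * A 1%nat 2%nat - 1)
      + (INR (m + 3) * K2 m - (K1 m + r) * (K1 m + r)) *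
        ((0 + A 0%nat 0%nat + A 0%nat 1%nat + A 0%nat 2%nat) * (0 + A 0%nat 0%nat + A 0%nat 1%nat + A 0%nat 2%nat)
         - (0 + A 1%nat 0%nat + A 1%nat 1%nat + A 1%nat 2%nat) * (0 + A 1%nat 0%nat + A 1%nat 1%nat + A 1%nat 2%nat))).
    + ring.
    + rewrite E00, E11, EK. ring.
  - transitivity (INR (m + 3) * r * r *
        (A 0%nat 0%nat * A 1%nat 0%nat + A 0%nat 1%nat * A 1%nat 1%nat + A 0%nat 2%nat * A 1%nat 2%nat)
      + (INR (m + 3) * K2 m - (K1 m + r) * (K1 m + r)) *
        ((0 + A 0%nat 0%nat + A 0%nat 1%nat + A 0%nat 2%nat) * (0 + A 1%nat 0%nat + A 1%nat 1%nat + A 1%nat 2%nat))).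
    + ring.
    + rewrite E01, EK. ring.
Qed.

Lemma immersed_a m r : r < 0 -> immersed 3 (m + 3) (pa m r).
Proof.
  intros Hr x y Hx Hy Hxy Heq. unfold vec_eq, pa in Heq.
  destruct (Nat.ltb_spec x m); destruct (Nat.ltb_spec y m).
  - specialize (Heq 0%nat ltac:(lia)). apply INR_eq in Heq. lia.
  - specialize (Heq 0%nat ltac:(lia)). pose proof (pos_INR x). rewrite S_INR in Heq.
    destruct (Nat.eqb_spec 0 (y - m)); lra.
  - specialize (Heq 0%nat ltac:(lia)). pose proof (pos_INR y). rewrite S_INR in Heq.
    destruct (Nat.eqb_spec 0 (x - m)); lra.
  - specialize (Heq (x - m)%nat ltac:(lia)). rewrite Nat.eqb_refl in Heq.
    destruct (Nat.eqb_spec (x - m) (y - m)); [lia|lra].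
Qed.

Lemma immersed_b n t : (2 <= n)%nat -> t < 0 -> immersed n (n + 2) (pb n t).
Proof.
  intros Hn Ht x y Hx Hy Hxy Heq. unfold vec_eq, pb in Heq.
  destruct (Nat.ltb_spec x n); destruct (Nat.ltb_spec y n).
  - specialize (Heq x ltac:(lia)). rewrite Nat.eqb_refl in Heq.
    destruct (Nat.eqb_spec x y); [lia|lra].
  - specialize (Heq x ltac:(lia)). rewrite Nat.eqb_refl in Heq.
    destruct (Nat.eqb_spec y n); lra.
  - specialize (Heq y ltac:(lia)). rewrite Nat.eqb_refl in Heq.
    destruct (Nat.eqb_spec x n); lra.
  - specialize (Heq 0%nat ltac:(lia)).
    destruct (Nat.eqb_spec x n); destruct (Nat.eqb_spec y n); try lia; lra.
Qed.

Definition beta (n : nat) (t : R) (i : nat) : R :=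
  if Nat.eqb i n then 1 / (1 - INR n * t) else - t / (1 - INR n * t).

Definition Lfun (n : nat) (t : R) (i : nat) (z : vec) : R :=
  if Nat.eqb i n then (rsum n z - 1) / (INR n * t - 1)
  else z i - t * ((rsum n z - 1) / (INR n * t - 1)).

Definition W (a b : nat) (l : R) (v : nat) : R :=
  (if Nat.eqb a v then 1 - l else 0) + (if Nat.eqb b v then l else 0).

Definition Bc (n : nat) (t : R) (v i : nat) : R :=
  if Nat.eqb v (S n) then beta n t i else if Nat.eqb v i then 1 else 0.

Lemma L_affine n t i (x y z : vec) l : t < 0 -> (i <= n)%nat ->
  (forall j, (j < n)%nat -> z j = (1 - l) * x j + l * y j) ->
  Lfun n t i z = (1 - l) * Lfun n t i x + l * Lfun n t i y.
Proof.
  intros Ht Hi Hz.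
  assert (Hs : rsum n z = (1 - l) * rsum n x + l * rsum n y).
  { rewrite <- rsum_lin. apply rsum_ext_lt. exact Hz. }
  assert (Hd : INR n * t - 1 < 0) by (pose proof (pos_INR n); nra).
  unfold Lfun. rewrite Hs. destruct (Nat.eqb_spec i n).
  - field. lra.
  - rewrite Hz by lia. field. lra.
Qed.

Lemma rsum_const n c : rsum n (fun _ => c) = INR n * c.
Proof. induction n; simpl rsum; [simpl; ring|]. rewrite IHn, S_INR. ring. Qed.

Lemma L_vertex n t v i : t < 0 -> (v < n + 2)%nat -> (i <= n)%nat ->
  Lfun n t i (pb n t v) = Bc n t v i.
Proof.
  intros Ht Hv Hi.
  assert (Hd : INR n * t - 1 < 0) by (pose proof (pos_INR n); nra).
  unfold Lfun, Bc, beta, pb.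
  destruct (Nat.ltb_spec v n).
  - assert (Hs : rsum n (fun j => if Nat.eqb j v then 1 else 0) = 1).
    { rewrite (rsum_ext_lt n _ (fun j => 1 * (if Nat.eqb j v then 1 else 0))) by (intros; ring).
      rewrite rsum_delta. destruct (Nat.ltb_spec v n); [ring|lia]. }
    rewrite Hs. destruct (Nat.eqb_spec v (S n)); [lia|].
    destruct (Nat.eqb_spec i n).
    + destruct (Nat.eqb_spec v i); [lia|]. field. lra.
    + destruct (Nat.eqb_spec i v); destruct (Nat.eqb_spec v i); try lia; field; lra.
  - destruct (Nat.eqb_spec v n).
    + subst v. rewrite rsum_const. destruct (Nat.eqb_spec n (S n)); [lia|].
      destruct (Nat.eqb_spec i n).
      * subst. rewrite Nat.eqb_refl. field. lra.
      * destruct (Nat.eqb_spec n i); [lia|]. field. lra.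
    + assert (v = S n) by lia. subst v. rewrite rsum_const. rewrite Nat.eqb_refl.
      destruct (Nat.eqb_spec i n); field; lra.
Qed.

Lemma Bc_W n t a b l i : i <> S n ->
  (1 - l) * Bc n t a i + l * Bc n t b i = W a b l i + W a b l (S n) * beta n t i.
Proof.
  intro Hi. unfold Bc, W.
  destruct (Nat.eqb_spec a (S n)); destruct (Nat.eqb_spec a i);
  destruct (Nat.eqb_spec b (S n)); destruct (Nat.eqb_spec b i); try lia; ring.
Qed.

Lemma W_nonneg a b l v : 0 <= l <= 1 -> 0 <= W a b l v.
Proof. intro H. unfold W. destruct (Nat.eqb a v); destruct (Nat.eqb b v); lra. Qed.

Lemma Wpos_mem a b l v : 0 < W a b l v -> v = a \/ v = b.
Proof. unfold W. destruct (Nat.eqb_spec a v); destruct (Nat.eqb_spec b v); auto; lra. Qed.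

Lemma Wa a b l : a <> b -> W a b l a = 1 - l.
Proof. intro H. unfold W. rewrite Nat.eqb_refl. destruct (Nat.eqb_spec b a); [lia|ring]. Qed.

Lemma Wb a b l : a <> b -> W a b l b = l.
Proof. intro H. unfold W. rewrite Nat.eqb_refl. destruct (Nat.eqb_spec a b); [lia|ring]. Qed.

Lemma core n a b c d l mu (be : nat -> R) : (2 <= n)%nat ->
  (a <= S n)%nat -> (b <= S n)%nat -> (c <= S n)%nat -> (d <= S n)%nat ->
  a <> b -> c <> d -> ~ same_edge a b c d -> 0 <= l <= 1 -> 0 <= mu <= 1 ->
  (forall i, (i <= n)%nat -> 0 < be i) ->
  (forall i, (i <= n)%nat -> W a b l i + W a b l (S n) * be i = W c d mu i + W c d mu (S n) * be i) ->
  (l = 0 /\ (a = c \/ a = d)) \/ (l = 1 /\ (b = c \/ b = d)).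
Proof.
  intros Hn Ha Hb Hc Hd Hab Hcd Hse Hl Hmu Hbe Heq.
  destruct (Rtotal_order (W c d mu (S n) - W a b l (S n)) 0) as [Dn | [D0 | Dp]].
  - assert (K : forall i, (i <= n)%nat -> i = c \/ i = d).
    { intros i Hi. apply (Wpos_mem c d mu). specialize (Heq i Hi). specialize (Hbe i Hi).
      pose proof (W_nonneg a b l i Hl). nra. }
    destruct (K 0%nat ltac:(lia)); destruct (K 1%nat ltac:(lia)); destruct (K 2%nat ltac:(lia)); lia.
  - assert (K : forall v, (v <= S n)%nat -> W a b l v = W c d mu v).
    { intros v Hv. destruct (Nat.eq_dec v (S n)); [subst; lra|].
      specialize (Heq v ltac:(lia)). nra. }
    assert (Ma : 0 < 1 - l -> a = c \/ a = d).
    { intro H. apply Wpos_mem with mu. rewrite <- K by lia. rewrite Wa by auto. exact H. }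
    assert (Mb : 0 < l -> b = c \/ b = d).
    { intro H. apply Wpos_mem with mu. rewrite <- K by lia. rewrite Wb by auto. exact H. }
    destruct (Req_dec l 0) as [L0|L0]; [left; split; auto; apply Ma; lra|].
    destruct (Req_dec l 1) as [L1|L1]; [right; split; auto; apply Mb; lra|].
    exfalso. apply Hse. unfold same_edge.
    destruct (Ma ltac:(lra)); destruct (Mb ltac:(lra)); subst; try lia; auto.
  - assert (K : forall i, (i <= n)%nat -> i = a \/ i = b).
    { intros i Hi. apply (Wpos_mem a b l). specialize (Heq i Hi). specialize (Hbe i Hi).
      pose proof (W_nonneg c d mu i Hmu). nra. }
    destruct (K 0%nat ltac:(lia)); destruct (K 1%nat ltac:(lia)); destruct (K 2%nat ltac:(lia)); lia.
Qed.

Lemma emb_b n : (2 <= n)%nat -> embedded n (n + 2) complete_graph (pb n (tb n)).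
Proof.
  intro Hn. destruct (tb_facts n) as [Ht0 _]. set (t := tb n) in *.
  split; [apply immersed_b; auto|].
  intros a b c d z Ha Hb Hc Hd Eab Ecd Hse [l [Hl Hz1]] [mu [Hmu Hz2]].
  assert (Hab : a <> b) by (unfold complete_graph in Eab; destruct (Nat.eqb_spec a b); simpl in Eab; congruence).
  assert (Hcd : c <> d) by (unfold complete_graph in Ecd; destruct (Nat.eqb_spec c d); simpl in Ecd; congruence).
  assert (Hbe : forall i, (i <= n)%nat -> 0 < beta n t i).
  { intros i Hi. assert (0 < 1 - INR n * t) by (pose proof (pos_INR n); nra).
    unfold beta. destruct (Nat.eqb i n); unfold Rdiv; apply Rmult_lt_0_compat; try lra;
    apply Rinv_0_lt_compat; lra. }
  assert (Heq : forall i, (i <= n)%nat ->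
     W a b l i + W a b l (S n) * beta n t i = W c d mu i + W c d mu (S n) * beta n t i).
  { intros i Hi. rewrite <- !Bc_W by lia.
    rewrite <- !(L_vertex n t) by (auto; lia).
    rewrite <- (L_affine n t i (pb n t a) (pb n t b) z l) by auto.
    rewrite <- (L_affine n t i (pb n t c) (pb n t d) z mu) by auto.
    reflexivity. }
  destruct (core n a b c d l mu (beta n t) Hn ltac:(lia) ltac:(lia) ltac:(lia) ltac:(lia)
              Hab Hcd Hse Hl Hmu Hbe Heq) as [[L0 M] | [L1 M]].
  - exists a. split; [auto|]. split; [auto|]. intros j Hj. rewrite Hz1 by auto. subst l. ring.
  - exists b. split; [auto|]. split; [auto|]. intros j Hj. rewrite Hz1 by auto. subst l. ring.
Qed.

Theorem corollary5p4 : forall n : nat, (2 <= n)%nat ->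
  (exists p : nat -> vec,
     immersed 3 (n + 2) p /\
     exists c : R, invariant_with 3 (n + 2) complete_graph p (fun _ => c)) /\
  (exists p : nat -> vec,
     embedded n (n + 2) complete_graph p /\
     exists c : R, invariant_with n (n + 2) complete_graph p (fun _ => c)).
Proof.
  intros n Hn. split.
  - exists (pa (n - 1) (ra (n - 1))).
    replace (n + 2)%nat with ((n - 1) + 3)%nat by lia.
    destruct (ra_facts (n - 1) ltac:(lia)) as [Hr _].
    split; [apply immersed_a; auto|].
    eexists. apply inv_a. lia.
  - exists (pb n (tb n)). split; [apply emb_b; auto|].
    eexists. apply inv_b. auto.
Qed.
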